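(* Let $\lambda_1,\lambda_2>0$ and let $X\sim\mathrm{Pois}(\lambda_1)$ and $Y\sim\mathrm{Pois}(\lambda_2)$ be independent Poisson random variables. For $n\ge1$ let $p_n=\mathbb{P}(XY\ge n)$. Then \[ p_n=\sqrt{2\pi}\,n^{1/4}\exp\bigl(-\sqrt{n}\,\log n+O(\sqrt{n})\bigr),\qquad n\to\infty. \] In particular, $\log p_n=-\sqrt{n}\,\log n+O(\sqrt{n})$.
   Context: $\log$ denotes the natural logarithm. $\mathrm{Pois}(\lambda)$ is the Poisson distribution with mean $\lambda$. *)

(* Defs.v *)
From Stdlib Require Import Reals Lra Lia Arith.
From Coquelicot Require Import Coquelicot.
Open Scope R_scope.

Definition pois_pmf (lam : R) (k : nat) : R :=
  exp (- lam) * lam ^ k / INR (fact k).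

(* Joint pmf of independent X ~ Pois(l1), Y ~ Pois(l2): P(X=j, Y=k)
   = P(X=j) P(Y=k).  Hence
   p_n = P(XY >= n) = sum_{j,k >= 0, j*k >= n} P(X=j) P(Y=k),
   written as an iterated series of nonnegative terms. *)
Definition prod_tail (l1 l2 : R) (n : nat) : R :=
  Series (fun j : nat =>
    Series (fun k : nat =>
      if Nat.leb n (j * k) then pois_pmf l1 j * pois_pmf l2 k else 0)).

(* Main.v *)
Require Import Defs.
From Stdlib Require Import Reals Lra Lia Arith.
From Coquelicot Require Import Coquelicot.
Open Scope R_scope.

Lemma Series_nonneg (a : nat -> R) : ex_series a -> (forall k, 0 <= a k) -> 0 <= Series a.
Proof.
  intros Ha Hp.
  assert (H := Series_le (fun k => 0 * a k) a).
  rewrite Series_scal_l in H. rewrite Rmult_0_l in H. apply H; auto.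
  intros k; specialize (Hp k); lra.
Qed.

Lemma term_le_Series (a : nat -> R) (m : nat) :
  ex_series a -> (forall k, 0 <= a k) -> a m <= Series a.
Proof.
  intros Ha Hp.
  rewrite (Series_incr_n a (S m)) by (lia || auto).
  simpl pred.
  assert (0 <= Series (fun k => a (S m + k)%nat)).
  { apply Series_nonneg; auto. apply (ex_series_incr_n a (S m)); auto. }
  assert (a m <= sum_f_R0 a m).
  { destruct m. simpl; lra. rewrite tech5.
    assert (0 <= sum_f_R0 a m) by (apply cond_pos_sum; auto). lra. }
  lra.
Qed.

Lemma pow_fact_le_exp (x : R) (j : nat) : 0 <= x -> x ^ j / INR (fact j) <= exp x.
Proof.
  intros Hx. eapply Rle_trans; [| apply (exp_ge_taylor x j Hx)].
  set (f := fun k : nat => x ^ k / INR (fact k)).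
  assert (Hf : forall k, 0 <= f k).
  { intros k; unfold f. apply Rmult_le_pos. apply pow_le; auto.
    left; apply Rinv_0_lt_compat, INR_fact_lt_0. }
  change (f j <= sum_f_R0 f j).
  destruct j. simpl; lra. rewrite tech5.
  assert (0 <= sum_f_R0 f j) by (apply cond_pos_sum; auto). lra.
Qed.

Lemma pmf_bound (l : R) (j : nat) : 0 < l -> (1 <= j)%nat ->
  pois_pmf l j <= (l * exp 1 / INR j) ^ j.
Proof.
  intros Hl Hj. unfold pois_pmf.
  assert (HJ : 0 < INR j) by (apply lt_0_INR; lia).
  assert (Hf : 0 < INR (fact j)) by apply INR_fact_lt_0.
  assert (H1 := pow_fact_le_exp (INR j) j (Rlt_le _ _ HJ)).
  assert (He : exp (INR j) = (exp 1) ^ j).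
  { rewrite <- Rpower_pow by apply exp_pos. unfold Rpower. rewrite ln_exp. f_equal; lra. }
  rewrite He in H1.
  assert (Hel : exp (- l) <= 1).
  { rewrite <- exp_0. left. apply exp_increasing. lra. }
  assert (Hp : 0 < INR j ^ j) by (apply pow_lt; auto).
  assert (H2 : / INR (fact j) <= exp 1 ^ j / INR j ^ j).
  { apply (Rmult_le_reg_r (INR j ^ j)); auto.
    unfold Rdiv. rewrite Rmult_assoc, Rinv_l by lra. rewrite Rmult_1_r.
    rewrite Rmult_comm. exact H1. }
  unfold Rdiv. rewrite !Rpow_mult_distr. rewrite pow_inv.
  assert (0 < l ^ j) by (apply pow_lt; auto).
  assert (0 <= / INR (fact j)) by (left; apply Rinv_0_lt_compat; auto).
  assert (0 < exp (-l)) by apply exp_pos.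
  apply Rle_trans with (l ^ j * / INR (fact j)).
  { rewrite Rmult_assoc. rewrite <- (Rmult_1_l (l ^ j * / INR (fact j))) at 2.
    apply Rmult_le_compat_r; auto. apply Rmult_le_pos; lra. }
  rewrite Rmult_assoc. apply Rmult_le_compat_l; lra.
Qed.

Lemma jk_pow_aux (n j k : nat) : (j <= k)%nat -> (n <= j * k)%nat ->
  sqrt (INR n) ^ (j + k) <= INR j ^ j * INR k ^ k.
Proof.
  intros Hjk Hn.
  set (s := sqrt (INR n)).
  assert (Hs0 : 0 <= s) by apply sqrt_pos.
  assert (Hss : s * s = INR n) by (apply sqrt_sqrt, pos_INR).
  assert (Hk : s <= INR k).
  { assert (INR n <= INR k * INR k).
    { rewrite <- mult_INR. apply le_INR. nia. }
    unfold s. rewrite <- (sqrt_square (INR k)) by apply pos_INR.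
    apply sqrt_le_1_alt; auto. }
  replace (j + k)%nat with (j + j + (k - j))%nat by lia.
  replace (INR k ^ k) with (INR k ^ j * INR k ^ (k - j)).
  2:{ rewrite <- pow_add. f_equal. lia. }
  rewrite pow_add. rewrite <- Rmult_assoc.
  apply Rmult_le_compat.
  - apply pow_le; auto.
  - apply pow_le; auto.
  - rewrite <- Rpow_mult_distr.
    replace (j + j)%nat with (2 * j)%nat by lia. rewrite pow_mult.
    apply pow_incr. split. apply pow2_ge_0. simpl. rewrite Rmult_1_r, Hss.
    rewrite <- mult_INR. apply le_INR. auto.
  - apply pow_incr. auto.
Qed.

Lemma jk_pow (n j k : nat) : (n <= j * k)%nat ->
  sqrt (INR n) ^ (j + k) <= INR j ^ j * INR k ^ k.
Proof.
  intros Hn. destruct (le_lt_dec j k).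
  - apply jk_pow_aux; auto.
  - rewrite Nat.add_comm, Rmult_comm. apply jk_pow_aux. lia. lia.
Qed.

Lemma two_sqrt_le (n j k : nat) : (n <= j * k)%nat -> 2 * sqrt (INR n) <= INR (j + k).
Proof.
  intros Hn.
  set (s := sqrt (INR n)).
  assert (Hs0 : 0 <= s) by apply sqrt_pos.
  assert (Hss : s * s = INR n) by (apply sqrt_sqrt, pos_INR).
  assert (INR n <= INR j * INR k) by (rewrite <- mult_INR; apply le_INR; auto).
  rewrite plus_INR.
  assert (0 <= INR j) by apply pos_INR. assert (0 <= INR k) by apply pos_INR.
  assert (Hq : 4 * (s * s) <= (INR j + INR k) * (INR j + INR k)).
  { pose proof (pow2_ge_0 (INR j - INR k)). nra. }
  destruct (Rle_lt_dec (2 * s) (INR j + INR k)) as [|Hc]; auto.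
  exfalso. assert (0 <= INR j + INR k) by lra.
  assert ((INR j + INR k) * (INR j + INR k) < (2 * s) * (2 * s)).
  { apply Rmult_le_0_lt_compat; lra. }
  nra.
Qed.

Lemma exp_le_mono (x y : R) : x <= y -> exp x <= exp y.
Proof. intros [H|H]. left; apply exp_increasing; auto. subst; lra. Qed.

Lemma pmf_nonneg (l : R) (j : nat) : 0 < l -> 0 <= pois_pmf l j.
Proof.
  intros Hl. unfold pois_pmf. apply Rmult_le_pos. apply Rmult_le_pos.
  left; apply exp_pos. apply pow_le; lra.
  left; apply Rinv_0_lt_compat, INR_fact_lt_0.
Qed.

Lemma term_bound (l1 l2 : R) (n j k : nat) : 0 < l1 -> 0 < l2 -> (1 <= n)%nat ->
  (n <= j * k)%nat ->
  pois_pmf l1 j * pois_pmf l2 k <= (Rmax l1 l2 * exp 1 / sqrt (INR n)) ^ (j + k).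
Proof.
  intros H1 H2 Hn Hjk.
  assert (Hj : (1 <= j)%nat) by (destruct j; lia).
  assert (Hk : (1 <= k)%nat) by (destruct k; lia).
  set (c := Rmax l1 l2 * exp 1).
  assert (He := exp_pos 1).
  assert (Hc1 : l1 * exp 1 <= c) by (apply Rmult_le_compat_r; [lra | apply Rmax_l]).
  assert (Hc2 : l2 * exp 1 <= c) by (apply Rmult_le_compat_r; [lra | apply Rmax_r]).
  assert (HJ : 0 < INR j) by (apply lt_0_INR; lia).
  assert (HK : 0 < INR k) by (apply lt_0_INR; lia).
  assert (Hs : 0 < sqrt (INR n)).
  { apply sqrt_lt_R0. apply lt_0_INR; lia. }
  apply Rle_trans with ((c / INR j) ^ j * (c / INR k) ^ k).
  { apply Rmult_le_compat. apply pmf_nonneg; auto. apply pmf_nonneg; auto.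
    - eapply Rle_trans. apply pmf_bound; auto. apply pow_incr. split.
      apply Rmult_le_pos; [nra | left; apply Rinv_0_lt_compat; auto].
      apply Rmult_le_compat_r; [left; apply Rinv_0_lt_compat; auto | auto].
    - eapply Rle_trans. apply pmf_bound; auto. apply pow_incr. split.
      apply Rmult_le_pos; [nra | left; apply Rinv_0_lt_compat; auto].
      apply Rmult_le_compat_r; [left; apply Rinv_0_lt_compat; auto | auto]. }
  unfold Rdiv. rewrite !Rpow_mult_distr, !pow_inv, pow_add.
  assert (0 <= c ^ j) by (apply pow_le; nra).
  assert (0 <= c ^ k) by (apply pow_le; nra).
  assert (Hp := jk_pow n j k Hjk).
  assert (0 < sqrt (INR n) ^ (j + k)) by (apply pow_lt; auto).
  replace (c ^ j * / INR j ^ j * (c ^ k * / INR k ^ k)) with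
    (c ^ j * c ^ k * / (INR j ^ j * INR k ^ k)).
  2:{ rewrite Rinv_mult. ring. }
  apply Rmult_le_compat_l. nra.
  apply Rinv_le_contravar; auto.
Qed.

Lemma geom_bound (q s : R) (j k : nat) : 0 < 2 * q <= 1 -> 2 * s <= INR (j + k) ->
  q ^ (j + k) <= exp (2 * s * ln (2 * q)) * ((/ 2) ^ j * (/ 2) ^ k).
Proof.
  intros Hq Hs.
  rewrite <- pow_add.
  replace (q ^ (j + k)) with ((/2) ^ (j + k) * (2 * q) ^ (j + k)).
  2:{ rewrite <- Rpow_mult_distr. f_equal. field. }
  rewrite Rmult_comm. apply Rmult_le_compat_r. apply pow_le; lra.
  rewrite <- (exp_ln ((2 * q) ^ (j + k))) by (apply pow_lt; lra).
  apply exp_le_mono. rewrite ln_pow by lra.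
  assert (ln (2 * q) <= 0).
  { rewrite <- ln_1. apply ln_le; lra. }
  nra.
Qed.

Lemma ex_geom_scal (a : R) : ex_series (fun k : nat => a * (/ 2) ^ k).
Proof.
  apply (ex_series_scal_l a (fun k : nat => (/ 2) ^ k)).
  apply ex_series_geom. rewrite Rabs_pos_eq; lra.
Qed.

Lemma Series_geom_scal (a : R) : Series (fun k : nat => a * (/ 2) ^ k) = 2 * a.
Proof.
  rewrite Series_scal_l, Series_geom by (rewrite Rabs_pos_eq; lra). field.
Qed.

Section S.
Variables (l1 l2 : R) (hl1 : 0 < l1) (hl2 : 0 < l2) (n : nat) (hn : (1 <= n)%nat).
Let c := Rmax l1 l2 * exp 1.
Let s := sqrt (INR n).
Variable (hcs : 2 * c <= s).
Let G := exp (2 * s * ln (2 * (c / s))).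
Let f := fun j k : nat => if Nat.leb n (j * k) then pois_pmf l1 j * pois_pmf l2 k else 0.

Lemma f_bound j k : 0 <= f j k <= G * (/ 2) ^ j * (/ 2) ^ k.
Proof.
  assert (Hs : 0 < s). { apply sqrt_lt_R0. apply lt_0_INR; lia. }
  assert (Hc : 0 < c). { unfold c. apply Rmult_lt_0_compat. 
    eapply Rlt_le_trans. apply hl1. apply Rmax_l. apply exp_pos. }
  assert (0 < G) by apply exp_pos.
  assert (0 < (/2) ^ j) by (apply pow_lt; lra).
  assert (0 < (/2) ^ k) by (apply pow_lt; lra).
  unfold f. destruct (Nat.leb n (j * k)) eqn:E.
  - apply Nat.leb_le in E. split.
    apply Rmult_le_pos; apply pmf_nonneg; auto.
    eapply Rle_trans. apply (term_bound l1 l2 n j k); auto.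
    rewrite Rmult_assoc. apply geom_bound.
    split. apply Rmult_lt_0_compat. lra. apply Rdiv_lt_0_compat; auto.
    apply (Rmult_le_reg_r s); auto. replace (2 * (c / s) * s) with (2 * c) by (field; lra). lra.
    apply two_sqrt_le; auto.
  - split. lra. apply Rmult_le_pos. nra. lra.
Qed.

Lemma ex_inner j : ex_series (f j).
Proof.
  apply (ex_series_le (f j) (fun k => (G * (/ 2) ^ j) * (/ 2) ^ k)).
  intros k. destruct (f_bound j k). rewrite Rabs_pos_eq; auto.
  apply ex_geom_scal.
Qed.

Lemma inner_bound j : 0 <= Series (f j) <= (2 * G) * (/ 2) ^ j.
Proof.
  split. apply Series_nonneg. apply ex_inner. intros k; apply f_bound.
  eapply Rle_trans. apply (Series_le (f j) (fun k => (G * (/ 2) ^ j) * (/ 2) ^ k)).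
  intros k; apply f_bound. apply ex_geom_scal.
  rewrite Series_geom_scal. lra.
Qed.

Lemma ex_outer : ex_series (fun j => Series (f j)).
Proof.
  apply (ex_series_le (fun j => Series (f j)) (fun j => (2 * G) * (/ 2) ^ j)).
  intros j. destruct (inner_bound j). change (Rabs (Series (f j)) <= 2 * G * (/ 2) ^ j).
  rewrite Rabs_pos_eq; auto.
  apply ex_geom_scal.
Qed.

Lemma tail_upper : prod_tail l1 l2 n <= 4 * G.
Proof.
  unfold prod_tail. fold f.
  eapply Rle_trans. apply (Series_le _ (fun j => (2 * G) * (/ 2) ^ j)).
  apply inner_bound. apply ex_geom_scal.
  rewrite Series_geom_scal. lra.
Qed.

Lemma tail_lower (m : nat) : (n <= m * m)%nat ->
  pois_pmf l1 m * pois_pmf l2 m <= prod_tail l1 l2 n.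
Proof.
  intros Hm. unfold prod_tail. fold f.
  eapply Rle_trans. 2: apply (term_le_Series _ m ex_outer (fun j => proj1 (inner_bound j))).
  eapply Rle_trans. 2: apply (term_le_Series _ m (ex_inner m) (fun k => proj1 (f_bound m k))).
  unfold f. replace (Nat.leb n (m * m)) with true. lra.
  symmetry. apply Nat.leb_le. auto.
Qed.
End S.

Lemma ln_le_sub1 (y : R) : 0 < y -> ln y <= y - 1.
Proof.
  intros Hy. destruct (Req_dec (ln y) 0) as [H|H].
  - rewrite H. assert (y = 1). { rewrite <- (exp_ln y) by auto. rewrite H, exp_0. auto. } lra.
  - assert (H1 := exp_ineq1 (ln y) H). rewrite exp_ln in H1 by auto. lra.
Qed.

Lemma fact_le_pow (m : nat) : INR (fact m) <= INR m ^ m.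
Proof.
  induction m. simpl. lra.
  change (fact (S m)) with (S m * fact m)%nat. rewrite mult_INR.
  change (INR (S m) ^ S m) with (INR (S m) * INR (S m) ^ m).
  apply Rmult_le_compat_l. apply pos_INR.
  eapply Rle_trans. apply IHm. apply pow_incr. split. apply pos_INR. apply le_INR; lia.
Qed.

Lemma ln_pmf_ge (l : R) (m : nat) : 0 < l -> (1 <= m)%nat ->
  - l + INR m * ln l - INR m * ln (INR m) <= ln (pois_pmf l m).
Proof.
  intros Hl Hm. unfold pois_pmf.
  assert (HF := INR_fact_lt_0 m).
  assert (HM : 0 < INR m) by (apply lt_0_INR; lia).
  rewrite ln_div, ln_mult, ln_exp, ln_pow; auto.
  2: apply exp_pos. 2: apply pow_lt; auto. 2: apply Rmult_lt_0_compat; [apply exp_pos | apply pow_lt; auto].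
  assert (ln (INR (fact m)) <= INR m * ln (INR m)).
  { rewrite <- ln_pow by auto. apply ln_le; auto. apply fact_le_pow. }
  lra.
Qed.

Lemma main_bound (l1 l2 : R) (hl1 : 0 < l1) (hl2 : 0 < l2) :
  exists (C : R) (N : nat), forall n : nat, (1 <= n)%nat -> (N <= n)%nat ->
    0 < prod_tail l1 l2 n /\
    Rabs (ln (prod_tail l1 l2 n) + sqrt (INR n) * ln (INR n)) <= C * sqrt (INR n).
Proof.
  set (c := Rmax l1 l2 * exp 1).
  assert (Hc : 0 < c). { unfold c. apply Rmult_lt_0_compat.
    eapply Rlt_le_trans. apply hl1. apply Rmax_l. apply exp_pos. }
  destruct (INR_unbounded ((2 * c) ^ 2)) as [N0 HN0].
  set (K := Rabs (ln l1 + ln l2)).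
  set (C := l1 + l2 + 2 * K + 6 + 3 + 2 * Rabs (ln (2 * c))).
  exists C, N0. intros n Hn HN.
  set (s := sqrt (INR n)).
  assert (Hn0 : 1 <= INR n) by (apply (le_INR 1); auto).
  assert (Hs0 : 0 <= s) by apply sqrt_pos.
  assert (Hss : s * s = INR n) by (apply sqrt_sqrt; lra).
  assert (Hs1 : 1 <= s) by nra.
  assert (HNn : INR N0 <= INR n) by (apply le_INR; auto).
  assert (Hcs : 2 * c <= s).
  { simpl in HN0. nra. }
  assert (Hlnn : ln (INR n) = 2 * ln s).
  { rewrite <- Hss, ln_mult by lra. ring. }
  assert (HLs : ln s <= s - 1) by (apply ln_le_sub1; lra).
  assert (HL0 : 0 <= ln s) by (rewrite <- ln_1; apply ln_le; lra).
  set (m := S (Nat.sqrt n)).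
  assert (Hm : (n <= m * m)%nat).
  { unfold m. destruct (Nat.sqrt_spec n) as [_ H]; lia. }
  assert (Hlow := tail_lower l1 l2 hl1 hl2 n Hn Hcs m Hm).
  assert (HM : 1 <= INR m) by (apply (le_INR 1); unfold m; lia).
  assert (HMs : INR m <= s + 1).
  { unfold m. rewrite S_INR. apply Rplus_le_compat_r.
    destruct (Nat.sqrt_spec n) as [H _]; [lia|].
    rewrite <- (sqrt_square (INR (Nat.sqrt n))) by apply pos_INR.
    unfold s. apply sqrt_le_1_alt. rewrite <- mult_INR. apply le_INR; auto. }
  assert (HP1 : 0 < pois_pmf l1 m).
  { unfold pois_pmf. apply Rdiv_lt_0_compat. apply Rmult_lt_0_compat. apply exp_pos.
    apply pow_lt; auto. apply INR_fact_lt_0. }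
  assert (HP2 : 0 < pois_pmf l2 m).
  { unfold pois_pmf. apply Rdiv_lt_0_compat. apply Rmult_lt_0_compat. apply exp_pos.
    apply pow_lt; auto. apply INR_fact_lt_0. }
  assert (Hp : 0 < prod_tail l1 l2 n).
  { eapply Rlt_le_trans. 2: apply Hlow. apply Rmult_lt_0_compat; auto. }
  split; auto.
  assert (Hlow2 : ln (pois_pmf l1 m) + ln (pois_pmf l2 m) <= ln (prod_tail l1 l2 n)).
  { rewrite <- ln_mult by auto. apply ln_le; auto. apply Rmult_lt_0_compat; auto. }
  assert (Hm1 : (1 <= m)%nat) by (unfold m; lia).
  assert (H1 := ln_pmf_ge l1 m hl1 Hm1).
  assert (H2 := ln_pmf_ge l2 m hl2 Hm1).
  assert (Hlm0 : 0 <= ln (INR m)) by (rewrite <- ln_1; apply ln_le; lra).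
  assert (Hlm : ln (INR m) <= ln s + / s).
  { apply Rle_trans with (ln (s + 1)). apply ln_le; lra.
    replace (s + 1) with (s * (1 + / s)) by (field; lra).
    rewrite ln_mult. 2: lra. 2: { assert (0 < / s) by (apply Rinv_0_lt_compat; lra). lra. }
    assert (H := ln_le_sub1 (1 + / s)). 
    assert (0 < / s) by (apply Rinv_0_lt_compat; lra). 
    assert (ln (1 + / s) <= 1 + / s - 1) by (apply H; lra). lra. }
  assert (Hinv : / s <= 1). { rewrite <- Rinv_1. apply Rinv_le_contravar; lra. }
  assert (Hsinv : s * / s = 1) by (field; lra).
  assert (HmL : INR m * ln (INR m) <= s * ln s + ln s + 2).
  { apply Rle_trans with ((s + 1) * (ln s + / s)).
    apply Rmult_le_compat; lra. nra. }
  assert (HK : - K * (s + 1) <= INR m * (ln l1 + ln l2)).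
  { unfold K. destruct (Rle_lt_dec 0 (ln l1 + ln l2)).
    rewrite Rabs_pos_eq by auto. nra.
    rewrite Rabs_left by auto. nra. }
  assert (HK0 : 0 <= K) by apply Rabs_pos.
  assert (Hup := tail_upper l1 l2 hl1 hl2 n Hn Hcs). fold c s in Hup.
  assert (Hup2 : ln (prod_tail l1 l2 n) <= ln 4 + 2 * s * ln (2 * (c / s))).
  { rewrite <- ln_exp with (2 * s * ln (2 * (c / s))). rewrite <- ln_mult by (lra || apply exp_pos).
    apply ln_le; auto. }
  assert (Hq : ln (2 * (c / s)) = ln (2 * c) - ln s).
  { replace (2 * (c / s)) with ((2 * c) / s) by (field; lra). apply ln_div; lra. }
  assert (H4 : ln 4 <= 3) by (assert (H := ln_le_sub1 4); lra).
  assert (Hc2 : ln (2 * c) <= Rabs (ln (2 * c))) by apply Rle_abs.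
  assert (Hc2' : 0 <= Rabs (ln (2 * c))) by apply Rabs_pos.
  rewrite Hlnn. apply Rabs_le. split.
  - unfold C. nra.
  - rewrite Hq in Hup2. unfold C. nra.
Qed.

Theorem theorem2 (l1 l2 : R) (hl1 : 0 < l1) (hl2 : 0 < l2) :
  (exists (C : R) (N : nat), forall n : nat, (1 <= n)%nat -> (N <= n)%nat ->
     exists e : R, Rabs e <= C * sqrt (INR n) /\
       prod_tail l1 l2 n =
         sqrt (2 * PI) * Rpower (INR n) (1 / 4)
           * exp (- sqrt (INR n) * ln (INR n) + e))
  /\
  (exists (C : R) (N : nat), forall n : nat, (1 <= n)%nat -> (N <= n)%nat ->
     Rabs (ln (prod_tail l1 l2 n) + sqrt (INR n) * ln (INR n))
       <= C * sqrt (INR n)).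
Proof.
  destruct (main_bound l1 l2 hl1 hl2) as [C [N HCN]].
  split.
  2:{ exists C, N. intros n H1 H2. apply HCN; auto. }
  set (a := ln (sqrt (2 * PI))).
  exists (C + Rabs a + 1), N. intros n Hn HN.
  destruct (HCN n Hn HN) as [Hp Hb].
  set (s := sqrt (INR n)) in *.
  set (p := prod_tail l1 l2 n) in *.
  exists (ln p + s * ln (INR n) - a - 1 / 4 * ln (INR n)).
  assert (Hn0 : 1 <= INR n) by (apply (le_INR 1); auto).
  assert (Hs0 : 0 <= s) by apply sqrt_pos.
  assert (Hss : s * s = INR n) by (apply sqrt_sqrt; lra).
  assert (Hs1 : 1 <= s) by nra.
  assert (Hlnn : ln (INR n) = 2 * ln s).
  { rewrite <- Hss, ln_mult by lra. ring. }
  assert (HLs : ln s <= s - 1) by (apply ln_le_sub1; lra).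
  assert (HL0 : 0 <= ln s) by (rewrite <- ln_1; apply ln_le; lra).
  split.
  - assert (Ha : a <= Rabs a) by apply Rle_abs.
    assert (Ha' : - a <= Rabs a) by (rewrite <- Rabs_Ropp; apply Rle_abs).
    assert (Hb' := Hb). apply Rabs_le_between in Hb'.
    apply Rabs_le. rewrite Hlnn in *. nra.
  - assert (Hpi : 0 < sqrt (2 * PI)). { apply sqrt_lt_R0. pose proof PI_RGT_0. lra. }
    unfold Rpower. rewrite <- (exp_ln (sqrt (2 * PI))) at 1 by auto. fold a.
    rewrite <- !exp_plus. rewrite <- (exp_ln p) at 1 by auto. f_equal. ring.
Qed.
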